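(* Let $t\ge 0$ and $p_0\in\operatorname{dom}V$. Then the direction $d(p_0;t,b)$ is the unique solution of the cone projection problem \[ \min_{d\in\mathbb{R}^m}\|d+(b+tp_0)\|_2^2\quad\text{subject to}\quad D_{\mathcal E(p_0)}(p_0)A_{\mathcal E(p_0)}^\top d\ge 0 . \] Moreover, if $\hat u\in\mathbb{R}^n$ is a solution of the nonnegative least-squares problem \[ \min_{u\in\mathbb{R}^n}\|A D(p_0)u-(b+tp_0)\|_2^2\quad\text{subject to}\quad u_{\mathcal E(p_0)}\ge 0,\ u_{\mathcal E^{\mathsf C}(p_0)}=0, \] then $d(p_0;t,b)=A_{\mathcal E(p_0)}D_{\mathcal E(p_0)}(p_0)\hat u_{\mathcal E(p_0)}-(b+tp_0)$, and \[ \hat u_j\,[D(p_0)A^\top d(p_0;t,b)]_j=0\ \text{ for every } j\in\{1,\dots,n\},\qquad \|d(p_0;t,b)\|_2^2+\langle b+tp_0,d(p_0;t,b)\rangle=0 . \]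
   Context: Standing setting: $m\le n$ are positive integers, $A\in\mathbb{R}^{m\times n}$ has rank $m$, and $b\in\mathbb{R}^m\setminus\{0\}$; $e_j$ is the $j$-th standard basis vector of $\mathbb{R}^n$. For $t\ge0$ define $V(p;t,b)=\frac t2\|p\|_2^2+\langle p,b\rangle+\chi(-A^\top p)$, where $\chi(s)=0$ if $\|s\|_\infty\le 1$ and $\chi(s)=+\infty$ otherwise; $\operatorname{dom}V=\{p\in\mathbb{R}^m:\|A^\top p\|_\infty\le 1\}$. For $p\in\mathbb{R}^m$, the equicorrelation set is $\mathcal E(p)=\{j:|\langle A^\top p,e_j\rangle|=1\}$, $\mathcal E^{\mathsf C}(p)$ is its complement in $\{1,\dots,n\}$, and $D(p)=\operatorname{diag}(\operatorname{sgn}(-A^\top p))$ (with $\operatorname{sgn}(0)=0$). For an index set $\mathcal E$, $A_{\mathcal E}$ is the submatrix of $A$ with columns indexed by $\mathcal E$, $D_{\mathcal E}(p)$ is the principal submatrix of $D(p)$ with rows and columns indexed by $\mathcal E$, and $u_{\mathcal E}$ is the subvector of $u$ indexed by $\mathcal E$; vector inequalities are componentwise. For $p\in\operatorname{dom}V$, the subdifferential of $V(\cdot;t,b)$ at $p$ is the nonempty closed convex set $\partial_pV(p;t,b)=\{tp+b-\sum_{j\in\mathcal E(p)}u_jAD(p)e_j:\ u_j\ge0\}$, and $d(p;t,b):=-\operatorname{proj}_{\partial_pV(p;t,b)}(0)$, i.e. minus the element of $\partial_pV(p;t,b)$ of smallest Euclidean norm. *)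

(* Defs.v *)
From HB Require Import structures.
From mathcomp Require Import all_boot all_order all_algebra.
From mathcomp Require Import boolp classical_sets reals.
Set Implicit Arguments. Unset Strict Implicit. Unset Printing Implicit Defensive.
Import Order.TTheory GRing.Theory Num.Theory.
Local Open Scope ring_scope.
Local Open Scope classical_set_scope.

Section Defs.
Variables (R : realType) (m n : nat) (A : 'M[R]_(m, n)).

Definition dotv k (u v : 'cV[R]_k) : R := \sum_(i < k) u i 0 * v i 0.
Definition norm2 k (u : 'cV[R]_k) : R := dotv u u.


Definition domV (p : 'cV[R]_m) : Prop := forall j : 'I_n, `|(A^T *m p) j 0| <= 1.

Definition Eset (p : 'cV[R]_m) : {set 'I_n} :=
  [set j : 'I_n | `|(A^T *m p) j 0| == 1].

Definition Dmx (p : 'cV[R]_m) : 'M[R]_n :=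
  diag_mx (\row_(j < n) Num.sg (- (A^T *m p) j 0)).

(* subdifferential of V(.;t,b) at p *)
Definition subdiff (t : R) (b p : 'cV[R]_m) : set 'cV[R]_m :=
  [set x | exists u : 'cV[R]_n, (forall j, j \in Eset p -> 0 <= u j 0) /\
     x = t *: p + b - \sum_(j in Eset p) u j 0 *: (A *m Dmx p *m delta_mx j 0)].

Definition is_min_norm_elem (S : set 'cV[R]_m) (x : 'cV[R]_m) : Prop :=
  S x /\ forall y, S y -> norm2 x <= norm2 y.

Definition dir (t : R) (b p : 'cV[R]_m) : 'cV[R]_m :=
  - xget 0 (is_min_norm_elem (subdiff t b p)).

End Defs.

(* Main.v *)
Require Import Defs.
From HB Require Import structures.
From mathcomp Require Import all_boot all_order all_algebra.
From mathcomp Require Import boolp classical_sets reals.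
From mathcomp Require Import ring lra zify.
Import Order.TTheory GRing.Theory Num.Theory.
Set Implicit Arguments. Unset Strict Implicit. Unset Printing Implicit Defensive.
Local Open Scope ring_scope.

Section Basic.
Variable R : realType.

Lemma dotvE k (u v : 'cV[R]_k) : dotv u v = (u^T *m v) 0 0.
Proof. by rewrite /dotv !mxE; apply: eq_bigr => i _; rewrite !mxE. Qed.

Lemma dotvC k (u v : 'cV[R]_k) : dotv u v = dotv v u.
Proof. by rewrite /dotv; apply: eq_bigr => i _; rewrite mulrC. Qed.

Lemma dotvDl k (u v w : 'cV[R]_k) : dotv (u + v) w = dotv u w + dotv v w.
Proof. by rewrite /dotv -big_split; apply: eq_bigr => i _; rewrite !mxE mulrDl. Qed.

Lemma dotvZl k a (u w : 'cV[R]_k) : dotv (a *: u) w = a * dotv u w.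
Proof. by rewrite /dotv mulr_sumr; apply: eq_bigr => i _; rewrite !mxE mulrA. Qed.

Lemma dotvNl k (u w : 'cV[R]_k) : dotv (- u) w = - dotv u w.
Proof. by rewrite -scaleN1r dotvZl mulN1r. Qed.

Lemma dotvBl k (u v w : 'cV[R]_k) : dotv (u - v) w = dotv u w - dotv v w.
Proof. by rewrite dotvDl dotvNl. Qed.

Lemma dotvDr k (u v w : 'cV[R]_k) : dotv w (u + v) = dotv w u + dotv w v.
Proof. by rewrite dotvC dotvDl !(dotvC w). Qed.

Lemma dotvBr k (u v w : 'cV[R]_k) : dotv w (u - v) = dotv w u - dotv w v.
Proof. by rewrite dotvC dotvBl !(dotvC w). Qed.

Lemma dotvZr k a (u w : 'cV[R]_k) : dotv w (a *: u) = a * dotv w u.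
Proof. by rewrite dotvC dotvZl dotvC. Qed.

Lemma norm2D k (u v : 'cV[R]_k) : norm2 (u + v) = norm2 u + 2 * dotv u v + norm2 v.
Proof. rewrite /norm2 dotvDl !dotvDr (dotvC v u); ring. Qed.

Lemma norm2B k (u v : 'cV[R]_k) : norm2 (u - v) = norm2 u - 2 * dotv u v + norm2 v.
Proof. rewrite /norm2 dotvBl !dotvBr (dotvC v u); ring. Qed.

Lemma norm2Z k a (u : 'cV[R]_k) : norm2 (a *: u) = a ^+ 2 * norm2 u.
Proof. rewrite /norm2 dotvZl dotvZr; ring. Qed.

Lemma norm2N k (u : 'cV[R]_k) : norm2 (- u) = norm2 u.
Proof. by rewrite /norm2 dotvNl dotvC dotvNl opprK. Qed.

Lemma norm2_ge0 k (u : 'cV[R]_k) : 0 <= norm2 u.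
Proof. by rewrite /norm2 /dotv; apply: sumr_ge0 => i _; rewrite -expr2 sqr_ge0. Qed.

Lemma norm2_eq0 k (u : 'cV[R]_k) : norm2 u <= 0 -> u = 0.
Proof.
move=> h; have h0 : norm2 u = 0 by apply/eqP; rewrite eq_le h norm2_ge0.
apply/matrixP => i j; rewrite (ord1 j) mxE.
have hp : forall l, xpredT l -> 0 <= u l 0 * u l 0 by move=> l _; rewrite -expr2 sqr_ge0.
have := @psumr_eq0P R _ xpredT (fun i => u i 0 * u i 0) hp h0 i isT.
by move=> /eqP; rewrite mulf_eq0 orbb => /eqP.
Qed.

Lemma dot_mul k l (M : 'M[R]_(k, l)) w r : dotv (M *m w) r = dotv w (M^T *m r).
Proof. by rewrite !dotvE trmx_mul !mulmxA. Qed.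

Lemma dotv_delta k (j : 'I_k) (v : 'cV[R]_k) : dotv (delta_mx j 0) v = v j 0.
Proof.
rewrite /dotv (bigD1 j) //= big1 ?addr0; first by rewrite mxE !eqxx mul1r.
by move=> i /negbTE hi; rewrite mxE hi mul0r.
Qed.

Lemma mulmx_trT_eq0 k l (Y : 'M[R]_(k, l)) : Y *m Y^T = 0 -> Y = 0.
Proof.
move=> h; apply/matrixP => i j; rewrite mxE.
have : (Y *m Y^T) i i = 0 by rewrite h mxE.
rewrite mxE => h0.
have hp : forall l, xpredT l -> 0 <= Y i l * Y^T l i by move=> l' _; rewrite mxE -expr2 sqr_ge0.
have := @psumr_eq0P R _ xpredT (fun j => Y i j * Y^T j i) hp h0 j isT.
by rewrite mxE => /eqP; rewrite mulf_eq0 orbb => /eqP.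
Qed.

Lemma rank_TN k l (N : 'M[R]_(k, l)) : (\rank N <= \rank (N^T *m N))%N.
Proof.
set X := N^T.
have e : N^T *m N = X *m X^T by rewrite /X trmxK.
rewrite e -(mxrank_tr N) -/X.
have hs : (kermx (X *m X^T) <= kermx X)%MS.
  rewrite sub_kermx; apply/eqP/mulmx_trT_eq0.
  by rewrite trmx_mul !mulmxA -(mulmxA _ X) mulmx_ker mul0mx.
have := mxrankS hs; rewrite !mxrank_ker.
have := rank_leq_row X; have := rank_leq_row (X *m X^T).
lia.
Qed.

Lemma lsq k l (N : 'M[R]_(k, l)) (c : 'cV[R]_k) : exists x, N^T *m (N *m x - c) = 0.
Proof.
have hN : (N <= N^T *m N)%MS.
  have := mxrank_leqif_sup (submxMl N^T N).
  by case=> _ <-; rewrite eqn_leq rank_TN andbT mxrankS ?submxMl.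
have : (c^T *m N <= N^T *m N)%MS by apply: submx_trans (submxMl _ _) hN.
case/submxP => D hD; exists D^T.
rewrite mulmxBr mulmxA -[N^T *m N]trmxK trmx_mul trmxK -trmx_mul -hD.
by rewrite trmx_mul trmxK subrr.
Qed.

Lemma quad (a b : R) : 0 <= b -> (forall s, 0 < s -> s <= 1 -> 0 <= 2 * s * a + s ^+ 2 * b) -> 0 <= a.
Proof.
move=> hb h; rewrite leNgt; apply/negP => ha.
have hd : 0 < b - a by lra.
set s := - a / (b - a).
have hs : s * (b - a) = - a by rewrite /s mulfVK // gt_eqF.
have s0 : 0 < s by rewrite /s divr_gt0 // oppr_gt0.
have s1 : s <= 1 by rewrite /s ler_pdivrMr // mul1r; lra.
have := h s s0 s1; nra.
Qed.

Lemma fin_min (T : finType) (P : pred T) (f : T -> R) x0 : P x0 ->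
  exists x, P x /\ forall y, P y -> f x <= f y.
Proof. by move=> h; case: (arg_minP f h) => x Px hx; exists x. Qed.


End Basic.

Section NNLS.
Variables (R : realType) (m n : nat) (M : 'M[R]_(m, n)) (E : {set 'I_n}) (c : 'cV[R]_m).

Definition inU (u : 'cV[R]_n) := (forall j, j \in E -> 0 <= u j 0) /\ (forall j, j \notin E -> u j 0 = 0).
Definition obj (u : 'cV[R]_n) := norm2 (M *m u - c).
Definition suppIn (u : 'cV[R]_n) (F : {set 'I_n}) := forall j, j \notin F -> u j 0 = 0.
Definition stat (u : 'cV[R]_n) (F : {set 'I_n}) := forall j, j \in F -> (M^T *m (M *m u - c)) j 0 = 0.

Lemma proj_span F : exists l, suppIn l F /\ stat l F.
Proof.
pose Pf : 'M[R]_n := diag_mx (\row_j (j \in F)%:R).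
have [x hx] := lsq (M *m Pf) c.
exists (Pf *m x); split.
  by move=> j hj; rewrite /Pf mul_diag_mx !mxE (negbTE hj) mul0r.
move=> j hj; move: hx; rewrite trmx_mul tr_diag_mx -mulmxA => /matrixP/(_ j 0).
rewrite mul_diag_mx !mxE => h.
rewrite -[RHS]h; apply: eq_bigr => k _; rewrite !mxE hj mul1r //.
Qed.

Lemma dot_supp (w : 'cV[R]_n) F (v : 'cV[R]_n) : suppIn w F -> (forall j, j \in F -> v j 0 = 0) ->
  dotv w v = 0.
Proof.
move=> hw hv; rewrite /dotv big1 // => j _.
by case: (boolP (j \in F)) => hj; [rewrite hv ?mulr0 | rewrite hw ?mul0r].
Qed.

Lemma proj_opt l F v : suppIn l F -> stat l F -> suppIn v F -> obj l <= obj v.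
Proof.
move=> hl hs hv; rewrite /obj.
have -> : M *m v - c = M *m (v - l) + (M *m l - c).
  by rewrite mulmxBr addrA subrK.
rewrite [X in _ <= X]norm2D dot_mul (dot_supp (F := F)) //.
  by rewrite mulr0 addr0 lerDr norm2_ge0.
by move=> j hj; rewrite !mxE hv ?hl ?subrr.
Qed.

Definition supp (u : 'cV[R]_n) : {set 'I_n} := [set j | u j 0 != 0].

Lemma descent u : inU u -> exists v F, inU v /\ suppIn v F /\ stat v F /\ obj v <= obj u.
Proof.
suff H : forall k (u : 'cV[R]_n), (#|supp u| < k)%N -> inU u ->
    exists v F, inU v /\ suppIn v F /\ stat v F /\ obj v <= obj u.
  by move=> hu; apply: (H _ u (ltnSn _)).
clear u; elim=> [|k IH] u hcard hu; first by rewrite ltn0 in hcard.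
set F := supp u in hcard.
have hFE : forall j, j \in F -> j \in E.
  move=> j; rewrite inE; apply: contraR => hj; apply/eqP; exact: hu.2.
have huF : suppIn u F by move=> j; rewrite inE negbK => /eqP.
have upos : forall j, j \in F -> 0 < u j 0.
  move=> j hj; rewrite lt0r; move: (hj); rewrite inE => ->; exact: hu.1 _ (hFE _ hj).
have [l [hl hs]] := proj_span F.
have hlu : obj l <= obj u := proj_opt hl hs huF.
case: (boolP [exists j in F, l j 0 < 0]) => hneg; last first.
  exists l, F; split; last by split; [exact: hl | split; [exact: hs | exact: hlu]].
  split=> j hj.
    case: (boolP (j \in F)) => hjF; last by rewrite hl.
    move/existsPn: hneg => /(_ j); rewrite hjF /= -leNgt; exact.
  apply: hl; apply: contra hj; exact: hFE.
have [j1 hj1] := existsP hneg.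
pose P := fun j => (j \in F) && (l j 0 < 0).
pose f := fun j => u j 0 / (u j 0 - l j 0).
have [j0 [hP0 hmin]] := @fin_min R _ P f j1 hj1.
move/andP: hP0 => [hj0F hl0].
have u0 := upos _ hj0F.
set s := f j0.
have hden : 0 < u j0 0 - l j0 0 by lra.
have hs1 : s * (u j0 0 - l j0 0) = u j0 0 by rewrite /s /f mulfVK // gt_eqF.
have s0 : 0 <= s by rewrite /s /f divr_ge0 // ltW.
have s1 : s <= 1 by rewrite /s /f ler_pdivrMr // mul1r; lra.
pose w := u + s *: (l - u).
have wE : forall j, w j 0 = u j 0 + s * (l j 0 - u j 0) by move=> j; rewrite !mxE.
have hw0 : w j0 0 = 0 by rewrite wE; lra.
have hwF : suppIn w F by move=> j hj; rewrite wE huF // hl // subrr mulr0 addr0.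
have hcard' : (#|supp w| < k)%N.
  have : (#|supp w| < #|F|)%N; last by move=> h; apply: leq_trans h _.
  apply: proper_card; apply/properP; split.
    apply/fintype.subsetP => j; rewrite inE; apply: contraR => hj; apply/eqP; exact: hwF.
  by exists j0 => //; rewrite inE hw0 eqxx.
have hwU : inU w.
  split=> j hj; last first.
    apply: hwF; apply: contra hj; exact: hFE.
  case: (boolP (j \in F)) => hjF; last by rewrite hwF.
  have uj := upos _ hjF.
  rewrite wE; case: (leP 0 (l j 0)) => hlj.
    nra.
  have hPj : P j by rewrite /P hjF hlj.
  have := hmin j hPj; rewrite -/s /f => hsj.
  have hdj : 0 < u j 0 - l j 0 by lra.
  move: hsj; rewrite ler_pdivlMr // => hsj.
  nra.
have hwu : obj w <= obj u.
  set a := M *m u - c; set b := M *m l - c.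
  have ew : M *m w - c = a + s *: (b - a).
    rewrite /w /a /b mulmxDr -scalemxAr mulmxBr.
    have -> : M *m l - c - (M *m u - c) = M *m l - M *m u by rewrite opprB addrA subrK.
    by rewrite addrAC.
  have hb : norm2 b = norm2 a + 2 * dotv a (b - a) + norm2 (b - a).
    by rewrite -norm2D addrC subrK.
  rewrite /obj ew norm2D dotvZr norm2Z -/(obj u) -/a.
  have hd := norm2_ge0 (b - a).
  move: hlu; rewrite /obj -/a -/b => hlu.
  move: hb hd hlu; set na := norm2 a; set nb := norm2 b; set nd := norm2 (b - a);
    set q := dotv a (b - a) => hb hd hlu.
  have h1 : 0 <= s * (na - nb) by apply: mulr_ge0 => //; lra.
  have h2 : 0 <= s * (1 - s) * nd by apply: mulr_ge0 => //; apply: mulr_ge0 => //; lra.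
  nra.
have [v [F' [hv1 [hv2 [hv3 hv4]]]]] := IH w hcard' hwU.
exists v, F'; do 3!split=> //; exact: le_trans hv4 hwu.
Qed.

Definition isMin u := inU u /\ forall v, inU v -> obj u <= obj v.

Lemma exists_min : exists u, isMin u.
Proof.
pose good F := exists v, inU v /\ suppIn v F /\ stat v F.
pose vF F := xget 0 (fun v => inU v /\ suppIn v F /\ stat v F).
have g0 : `[< good finset.set0 >].
  apply/asboolP; exists 0; split; last split.
  - by split=> j _; rewrite mxE.
  - by move=> j _; rewrite mxE.
  - by move=> j; rewrite finset.in_set0.
have [F0 [hF0 hmin]] := @fin_min R _ (fun F => `[< good F >]) (fun F => obj (vF F)) finset.set0 g0.
move/asboolP: hF0 => hF0.
have [h1 [h2 h3]] := xgetPex 0 hF0.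
exists (vF F0); split => // v hv.
have [w [F [hw1 [hw2 [hw3 hw4]]]]] := descent hv.
have gF : good F by exists w.
have [k1 [k2 k3]] := xgetPex 0 gF.
apply: le_trans (hmin F (asboolT gF)) _.
exact: le_trans (proj_opt k2 k3 hw2) hw4.
Qed.

Lemma kkt u : isMin u ->
  (forall j, j \in E -> 0 <= (M^T *m (M *m u - c)) j 0) /\
  dotv (M *m u) (M *m u - c) = 0 /\
  (forall j, u j 0 * (M^T *m (M *m u - c)) j 0 = 0).
Proof.
move=> [hu hmin]; set r := M *m u - c.
have hpos : forall j, j \in E -> 0 <= (M^T *m r) j 0.
  move=> j hj; pose g : 'cV[R]_m := M *m delta_mx j 0.
  apply: (@quad R _ (norm2 g)); first exact: norm2_ge0.
  move=> s s0 s1.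
  have hv : inU (u + s *: delta_mx j 0).
    split=> i hi; rewrite !mxE.
      by apply: addr_ge0; [exact: hu.1 | apply: mulr_ge0 => //; exact: ltW].
    have hij : (i == j) = false by apply/negbTE; apply: contra hi => /eqP ->.
    by rewrite hu.2 // hij mulr0 addr0.
  have := hmin _ hv; rewrite /obj mulmxDr -scalemxAr.
  have -> : M *m u + s *: g - c = r + s *: g by rewrite addrAC.
  rewrite (norm2D r) dotvZr norm2Z (dotvC r) /g dot_mul dotv_delta -/r.
  lra.
have hz : dotv (M *m u) r = 0.
  set a := dotv (M *m u) r; set b := norm2 (M *m u).
  have h : forall s, -1 <= s -> 0 <= 2 * s * a + s ^+ 2 * b.
    move=> s hs.
    have hv : inU ((1 + s) *: u).
      split=> i hi; rewrite !mxE.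
        by apply: mulr_ge0; [lra | exact: hu.1].
      by rewrite hu.2 // mulr0.
    have := hmin _ hv; rewrite /obj -scalemxAr scalerDl scale1r.
    have -> : M *m u + s *: (M *m u) - c = r + s *: (M *m u) by rewrite addrAC.
    rewrite (norm2D r) dotvZr norm2Z -/r (dotvC r) -/a -/b; nra.
  have hb : 0 <= b by exact: norm2_ge0.
  have ha1 : 0 <= a by apply: quad hb _ => s s0 _; apply: h; lra.
  have ha2 : 0 <= - a.
    apply: quad hb _ => s s0 s1; have := h (- s); rewrite sqrrN.
    have -> : 2 * - s * a = 2 * s * - a by ring.
    by apply; lra.
  lra.
split=> //; split=> // j.
have hnn : forall i, xpredT i -> 0 <= u i 0 * (M^T *m r) i 0.
  move=> i _; case: (boolP (i \in E)) => hi.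
    by apply: mulr_ge0; [exact: hu.1 | exact: hpos].
  by rewrite hu.2 // mul0r.
have hsum : \sum_(i | xpredT i) u i 0 * (M^T *m r) i 0 = 0.
  by have := hz; rewrite dot_mul.
exact: (psumr_eq0P hnn hsum).
Qed.

End NNLS.

Lemma sum_delta (R : realType) n (E : {set 'I_n}) (u : 'cV[R]_n) i :
  (\sum_(j in E) u j 0 *: delta_mx j 0 : 'cV[R]_n) i 0 = if i \in E then u i 0 else 0.
Proof.
rewrite summxE; case: ifP => hi.
  rewrite (bigD1 i) //= big1 ?addr0; first by rewrite !mxE !eqxx mulr1.
  by move=> j /andP [_ hj]; rewrite !mxE eq_sym (negbTE hj) mulr0.
apply: big1 => j hj; rewrite !mxE.
have -> : (i == j) = false by apply/negbTE; apply: contraFN hi => /eqP ->.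
by rewrite mulr0.
Qed.

Lemma sum_mul (R : realType) m n (M : 'M[R]_(m, n)) (E : {set 'I_n}) (u : 'cV[R]_n) :
  \sum_(j in E) u j 0 *: (M *m (delta_mx j 0 : 'cV[R]_n)) = M *m (\sum_(j in E) u j 0 *: (delta_mx j 0 : 'cV[R]_n)).
Proof. by rewrite mulmx_sumr; apply: eq_bigr => j _; rewrite scalemxAr. Qed.

Theorem lemma3p3 (R : realType) (m n : nat) (A : 'M[R]_(m, n))
  (b : 'cV[R]_m) (t : R) (p0 : 'cV[R]_m) :
  (m <= n)%N -> \rank A = m -> b != 0 ->
  0 <= t -> domV A p0 ->
  let c := b + t *: p0 in
  let E := Eset A p0 in
  let D := Dmx A p0 in
  let d := dir A t b p0 in
  let feas (x : 'cV[R]_m) := forall j, j \in E -> 0 <= (D *m A^T *m x) j 0 in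
  (* d is the unique solution of the cone projection problem *)
  (forall x : 'cV[R]_m,
     (feas x /\ forall y : 'cV[R]_m, feas y -> norm2 (x + c) <= norm2 (y + c))
     <-> x = d) /\
  (* characterization via any solution of the NNLS problem *)
  (forall uh : 'cV[R]_n,
     ((forall j, j \in E -> 0 <= uh j 0) /\ (forall j, j \notin E -> uh j 0 = 0) /\
      (forall u : 'cV[R]_n,
         (forall j, j \in E -> 0 <= u j 0) -> (forall j, j \notin E -> u j 0 = 0) ->
         norm2 (A *m D *m uh - c) <= norm2 (A *m D *m u - c))) ->
     d = \sum_(j in E) uh j 0 *: (A *m D *m delta_mx j 0) - c /\
     (forall j : 'I_n, uh j 0 * (D *m A^T *m d) j 0 = 0) /\
     norm2 d + dotv c d = 0).
Proof.
move=> _ _ _ _ _ c E D d feas.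
pose M := A *m D.
have DAT : D *m A^T = M^T by rewrite /M trmx_mul /D /Dmx tr_diag_mx.
have hinU : forall u : 'cV[R]_n, inU E u -> \sum_(j in E) u j 0 *: (delta_mx j 0 : 'cV[R]_n) = u.
  move=> u [h1 h2]; apply/matrixP => i k; rewrite (ord1 k) sum_delta.
  by case: ifP => // /negbT hi; rewrite h2.
have hsubU : forall u : 'cV[R]_n, (forall j, j \in E -> 0 <= u j 0) ->
    inU E (\sum_(j in E) u j 0 *: (delta_mx j 0 : 'cV[R]_n)).
  move=> u hu; split=> j hj; rewrite sum_delta ?hj //.
    by exact: hu.
  by rewrite (negbTE hj).
have dir_eq : forall u, isMin M E c u -> d = M *m u - c.
  move=> u hmin; have [k1 [k2 k3]] := kkt hmin.
  set r := M *m u - c in k1 k2 k3 *.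
  rewrite /d /dir.
  suff -> : xget 0 (is_min_norm_elem (subdiff A t b p0)) = - r by rewrite opprK.
  have hsub : forall x, subdiff A t b p0 x -> exists w, inU E w /\ x = c - M *m w.
    move=> x [v [hv ->]]; exists (\sum_(j in E) v j 0 *: (delta_mx j 0 : 'cV[R]_n)); split.
      exact: hsubU.
    by rewrite /M -sum_mul /c [t *: p0 + b]addrC.
  have hmem : subdiff A t b p0 (- r).
    exists u; split; first exact: hmin.1.1.
    rewrite -/E -/D -/M sum_mul hinU; last exact: hmin.1.
    by rewrite /r opprB /c [t *: p0 + b]addrC.
  have hbest : forall x, subdiff A t b p0 x -> norm2 (- r) <= norm2 x.
    move=> x /hsub [w [hw ->]]; rewrite norm2N -opprB norm2N.
    exact: hmin.2.
  have huniq : forall x, subdiff A t b p0 x -> norm2 x <= norm2 (- r) -> x = - r.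
    move=> x /hsub [w [hw ->]]; rewrite norm2N -opprB norm2N => hle.
    have e : M *m w - c = M *m (w - u) + r by rewrite /r mulmxBr addrA subrK.
    rewrite e norm2D dot_mul dotvBl -(dot_mul M u r) k2 subr0 in hle.
    have hp : 0 <= dotv w (M^T *m r).
      rewrite /dotv; apply: sumr_ge0 => j _.
      case: (boolP (j \in E)) => hj; first by apply: mulr_ge0; [exact: hw.1 | exact: k1].
      by rewrite hw.2 // mul0r.
    have hn := norm2_ge0 (M *m (w - u)).
    have h0 : norm2 (M *m (w - u)) <= 0 by lra.
    have := norm2_eq0 h0; rewrite mulmxBr => /eqP; rewrite subr_eq0 => /eqP hMw.
    by rewrite hMw.
  apply: xget_unique; first by split.
  by move=> y [hy1 hy2]; apply: huniq => //; apply: hy2.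
have hfeas : forall x, feas x <-> (forall j, j \in E -> 0 <= (M^T *m x) j 0).
  by move=> x; rewrite /feas DAT.
have [u0 hu0] := exists_min M E c.
have hd0 := dir_eq u0 hu0.
have [k1 [k2 k3]] := kkt hu0.
have hdc : d + c = M *m u0 by rewrite hd0 subrK.
have ineq : forall y, feas y -> norm2 (d + c) + norm2 (y - d) <= norm2 (y + c).
  move=> y /hfeas hy.
  have -> : y + c = (y - d) + (d + c) by rewrite [RHS]addrA subrK.
  have k2d : dotv (M *m u0) d = 0 by rewrite hd0.
  rewrite [X in _ <= X]norm2D hdc dotvBl (dotvC d) k2d subr0.
  have hp : 0 <= dotv y (M *m u0).
    rewrite dotvC dot_mul /dotv; apply: sumr_ge0 => j _.
    case: (boolP (j \in E)) => hj; first by apply: mulr_ge0; [exact: hu0.1.1 | exact: hy].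
    by rewrite hu0.1.2 // mul0r.
  lra.
have fd : feas d by apply/hfeas; rewrite hd0.
split.
  move=> x; split.
    move=> [hx hopt]; have h1 := hopt d fd; have h2 := ineq x hx.
    have := norm2_ge0 (x - d) => h3.
    have h0 : norm2 (x - d) <= 0 by lra.
    by apply/eqP; rewrite -subr_eq0; apply/eqP; exact: norm2_eq0.
  move=> ->; split=> // y hy; have := ineq y hy; have := norm2_ge0 (y - d); lra.
move=> uh [h1 [h2 h3]].
have hmin : isMin M E c uh by split; [split | move=> v [hv1 hv2]; exact: h3].
have hdu := dir_eq uh hmin.
have [l1 [l2 l3]] := kkt hmin.
split; first by rewrite hdu sum_mul hinU //; split.
split; first by move=> j; rewrite DAT hdu; exact: l3.
by rewrite /norm2 -dotvDl hdu subrK; exact: l2.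
Qed.
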